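(* The functor $\widetilde S:\mathbf{Gpd}\to(q\mathbf{ASmd})_0$ is fully faithful; that is, for groupoids $\mathcal K,\mathcal H$ the map $F\mapsto\widetilde S(F)$ is a bijection from the set of functors $\mathcal K\to\mathcal H$ onto the set of morphisms of quasi-schemoids $\widetilde S(\mathcal K)\to\widetilde S(\mathcal H)$ that send base points to base points.
   Context: Write $s(f),t(f)$ for source and target. A quasi-schemoid is a pair $(\mathcal C,S)$ with $\mathcal C$ a small category and $S$ a partition of $mor(\mathcal C)$ into nonempty blocks such that for all $\sigma,\tau,\mu\in S$ and $f,g\in\mu$ the sets $\{(a,b)\in\sigma\times\tau: s(a)=t(b), a\circ b=f\}$ and the analogous set for $g$ have equal cardinality. A morphism of quasi-schemoids $F:(\mathcal C,S)\to(\mathcal E,S')$ is a functor such that each $F(\sigma)$, $\sigma\in S$, lies in some block of $S'$. $(q\mathbf{ASmd})_0$ is the category of based quasi-schemoids: quasi-schemoids together with a subset $\mathcal C^\circ\subseteq ob(\mathcal C)$ of base points, with morphisms the morphisms of quasi-schemoids $F$ with $F(\mathcal C^\circ)\subseteq\mathcal E^\circ$. $\mathbf{Gpd}$ is the category of groupoids and functors. For a groupoid $\mathcal H$, $\widetilde S(\mathcal H)$ is the quasi-schemoid with underlying category $\widetilde{\mathcal H}$: $ob(\widetilde{\mathcal H})=mor(\mathcal H)$, $\mathrm{Hom}_{\widetilde{\mathcal H}}(g,h)=\{(h,g)\}$ if $t(h)=t(g)$ and empty otherwise, composition $(k,h)\circ(h,g)=(k,g)$; partition $\{\mathcal G_f\}_{f\in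 mor(\mathcal H)}$ with $\mathcal G_f=\{(k,l):k^{-1}l=f\}$; base points $\{1_x: x\in ob(\mathcal H)\}$. For a functor $F$, $\widetilde S(F)(f)=F(f)$, $\widetilde S(F)(f,g)=(F(f),F(g))$. *)

(* Defs.v *)
From Stdlib Require Import Logic.EqdepFacts.
Set Implicit Arguments.

Record Cat := mkCat {
  Ob : Type;
  Hom : Ob -> Ob -> Type;
  idm : forall x, Hom x x;
  comp : forall x y z, Hom y z -> Hom x y -> Hom x z;
  comp_id_l : forall x y (f : Hom x y), comp (idm y) f = f;
  comp_id_r : forall x y (f : Hom x y), comp f (idm x) = f;
  comp_assoc : forall x y z w (h : Hom z w) (g : Hom y z) (f : Hom x y),
      comp h (comp g f) = comp (comp h g) f
}.
Arguments idm {c} x.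
Arguments comp {c x y z} _ _.

Record Arr (C : Cat) := mkArr { asrc : Ob C; atgt : Ob C; ahom : Hom C asrc atgt }.
Arguments mkArr {C} asrc atgt ahom.

Record Functor (C D : Cat) := mkFunctor {
  fob : Ob C -> Ob D;
  fmor : forall x y, Hom C x y -> Hom D (fob x) (fob y);
  fmor_id : forall x, fmor x x (idm x) = idm (fob x);
  fmor_comp : forall x y z (g : Hom C y z) (f : Hom C x y),
      fmor x z (comp g f) = comp (fmor y z g) (fmor x y f)
}.
Arguments fob {C D} _ _.
Arguments fmor {C D} _ {x y} _.

Definition arr_map C D (F : Functor C D) (f : Arr C) : Arr D :=
  mkArr (fob F (asrc f)) (fob F (atgt f)) (fmor F (ahom f)).

Record Gpd := mkGpd {
  gcat :> Cat;
  ginv : forall x y, Hom gcat x y -> Hom gcat y x;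
  ginv_l : forall x y (f : Hom gcat x y), comp (ginv x y f) f = idm x;
  ginv_r : forall x y (f : Hom gcat x y), comp f (ginv x y f) = idm y
}.
Arguments ginv {g x y} _.

Definition equipotent (A B : Type) : Prop :=
  exists (u : A -> B) (v : B -> A),
    (forall a, v (u a) = a) /\ (forall b, u (v b) = b).

Definition is_partition (C : Cat) (S : (Arr C -> Prop) -> Prop) : Prop :=
  (forall s, S s -> exists f, s f) /\
  (forall f, exists s, S s /\ s f) /\
  (forall s t f, S s -> S t -> s f -> t f -> forall g, s g <-> t g).

Definition comp_fiber (C : Cat) (s t : Arr C -> Prop) (f : Arr C) : Type :=
  { p : Arr C * Arr C |
    s (fst p) /\ t (snd p) /\
    exists (x y z : Ob C) (a : Hom C y z) (b : Hom C x y),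
      fst p = mkArr y z a /\ snd p = mkArr x y b /\ f = mkArr x z (comp a b) }.

Record BQS := mkBQS {
  qcat : Cat;
  qpart : (Arr qcat -> Prop) -> Prop;
  qbase : Ob qcat -> Prop
}.

Definition is_quasi_schemoid (X : BQS) : Prop :=
  is_partition (qpart X) /\
  forall s t m f g, qpart X s -> qpart X t -> qpart X m -> m f -> m g ->
    equipotent (comp_fiber s t f) (comp_fiber s t g).

Definition is_bqs_morphism (X Y : BQS) (F : Functor (qcat X) (qcat Y)) : Prop :=
  (forall s, qpart X s -> exists t, qpart Y t /\ forall f, s f -> t (arr_map F f)) /\
  (forall x, qbase X x -> qbase Y (fob F x)).

(* Hom_{H~}(g,h) = {(h,g)} if t(h) = t(g), empty otherwise: represented by the
   (proof-irrelevant) proposition t(h) = t(g). *)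
Definition tildeHom (H : Gpd) (g h : Arr H) : Type := atgt h = atgt g.

Definition tildeCat (H : Gpd) : Cat.
Proof.
  refine (@mkCat (Arr H) (@tildeHom H) (fun g => eq_refl)
            (fun g h k (q : atgt k = atgt h) (p : atgt h = atgt g) => eq_trans q p)
            _ _ _).
  - intros x y f; apply eq_trans_refl_l.
  - intros x y f; apply eq_trans_refl_r.
  - intros x y z w h g f; apply eq_trans_assoc.
Defined.

(* G_f = {(k,l) : k^{-1} l = f}; an arrow of H~ from l to k is the pair (k,l) *)
Definition tildeBlock (H : Gpd) (f : Arr H) (m : Arr (tildeCat H)) : Prop :=
  exists (a b c : Ob H) (k : Hom H a c) (l : Hom H b c),
    asrc m = mkArr b c l /\ atgt m = mkArr a c k /\
    f = mkArr b a (comp (ginv k) l).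

Definition tildeS (H : Gpd) : BQS :=
  @mkBQS (tildeCat H)
    (fun s => exists f : Arr H, s = tildeBlock f)
    (fun g => exists x : Ob H, g = mkArr x x (idm x)).

Definition tildeF {K H : Gpd} (F : Functor K H) : Functor (tildeCat K) (tildeCat H).
Proof.
  refine (@mkFunctor (tildeCat K) (tildeCat H) (arr_map F)
            (fun g h (p : atgt h = atgt g) => f_equal (fob F) p : @tildeHom H (arr_map F g) (arr_map F h))
            _ _).
  - intros x; reflexivity.
  - intros x y z q p; simpl in *. unfold tildeHom in *. simpl. apply eq_trans_map_distr.
Defined.

(* Main.v *)
Require Import Defs.
From Stdlib Require Import Eqdep FunctionalExtensionality ProofIrrelevance IndefiniteDescription.

Arguments comp_id_l {c x y} f.
Arguments comp_id_r {c x y} f.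
Arguments comp_assoc {c x y z w} h g f.
Arguments ginv_l {g x y} f.
Arguments ginv_r {g x y} f.
Arguments fmor_comp {C D} f0 {x y z} g f.
Arguments fmor_id {C D} f0 x.

Ltac arr_inv e :=
  injection e; intros; subst;
  repeat match goal with
  | H : existT _ _ _ = existT _ _ _ |- _ => apply inj_pair2 in H; subst
  end.

Lemma mkArr_inj (C:Cat) a b (h h' : Hom C a b) : mkArr a b h = mkArr a b h' -> h = h'.
Proof. intro e. injection e. intros H. apply inj_pair2 in H. apply inj_pair2 in H. exact H. Qed.

Section G.
Variable G : Gpd.

Lemma inv_uniq a c (k : Hom G a c) (g : Hom G c a) : comp g k = idm a -> g = ginv k.
Proof.
  intro e. rewrite <- (comp_id_r g). rewrite <- (ginv_r k). rewrite comp_assoc, e.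
  apply comp_id_l.
Qed.

Lemma ginv_id a : ginv (idm a : Hom G a a) = idm a.
Proof. symmetry. apply inv_uniq. apply comp_id_l. Qed.

Lemma ginv_ginv a b (f : Hom G a b) : ginv (ginv f) = f.
Proof. symmetry. apply inv_uniq. apply ginv_r. Qed.

Definition Div (k l f : Arr G) : Prop :=
  exists a b c (k' : Hom G a c) (l' : Hom G b c),
    l = mkArr b c l' /\ k = mkArr a c k' /\ f = mkArr b a (comp (ginv k') l').

Lemma Div_intro a b c (k : Hom G a c) (l : Hom G b c) :
  Div (mkArr a c k) (mkArr b c l) (mkArr b a (comp (ginv k) l)).
Proof. exists a, b, c, k, l. auto. Qed.

Lemma Div_id_l c (l f : Arr G) : Div (mkArr c c (idm c)) l f -> f = l.
Proof.
  intros (a&b&c'&k'&l'&e1&e2&e3). arr_inv e2. subst.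
  rewrite ginv_id, comp_id_l. reflexivity.
Qed.

Lemma Div_id_r a (k f : Arr G) : Div k (mkArr a a (idm a)) f -> asrc f = a.
Proof.
  intros (a'&b&c'&k'&l'&e1&e2&e3). arr_inv e1. subst. reflexivity.
Qed.

Lemma Div_comp a b c (k : Hom G a c) (l : Hom G b c) (f : Hom G b a) :
  Div (mkArr a c k) (mkArr b c l) (mkArr b a f) -> l = comp k f.
Proof.
  intros (a'&b'&c'&k'&l'&e1&e2&e3). arr_inv e1. arr_inv e2.
  apply mkArr_inj in e3. subst.
  rewrite comp_assoc, ginv_r, comp_id_l. reflexivity.
Qed.
End G.
Arguments Div {G} k l f.

Lemma tilde_ext (K H : Gpd) (P Q : Functor (tildeCat K) (tildeCat H)) :
  fob P = fob Q -> P = Q.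
Proof.
  destruct P as [p pm pi pc], Q as [q qm qi qc]. simpl. intro e. subst q.
  assert (pm = qm).
  { apply functional_extensionality_dep; intro x.
    apply functional_extensionality_dep; intro y.
    apply functional_extensionality_dep; intro z.
    exact (proof_irrelevance (atgt (p y) = atgt (p x)) _ _). }
  subst qm. f_equal; apply proof_irrelevance.
Qed.

Theorem corollary3p5 (K H : Gpd) :
  (forall F : Functor K H, is_bqs_morphism (tildeS K) (tildeS H) (tildeF F)) /\
  (forall F G : Functor K H, tildeF F = tildeF G -> F = G) /\
  (forall Phi : Functor (tildeCat K) (tildeCat H),
      is_bqs_morphism (tildeS K) (tildeS H) Phi ->
      exists F : Functor K H, tildeF F = Phi).
Proof.
  split; [|split].
  -
    intro F. split.
    + intros s [f ->]. exists (tildeBlock (arr_map F f)). split.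
      * exists (arr_map F f). reflexivity.
      * intros m (a&b&c&k&l&e1&e2&e3).
        exists (fob F a), (fob F b), (fob F c), (fmor F k), (fmor F l).
        simpl. rewrite e1, e2, e3. simpl. repeat split.
        unfold arr_map; simpl. f_equal. rewrite fmor_comp. f_equal.
        apply inv_uniq. rewrite <- fmor_comp, ginv_l. apply fmor_id.
    + intros x [y ->]. exists (fob F y). simpl. unfold arr_map. simpl.
      rewrite fmor_id. reflexivity.
  - intros F G e.
    assert (ea : arr_map F = arr_map G) by exact (f_equal (fun P => fob P) e).
    assert (eo : fob F = fob G).
    { apply functional_extensionality; intro x.
      exact (f_equal (@asrc H) (f_equal (fun h => h (mkArr x x (idm x))) ea)). }
    destruct F as [p pm pi pc], G as [q qm qi qc]. simpl in *. subst q.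
    assert (pm = qm).
    { apply functional_extensionality_dep; intro x.
      apply functional_extensionality_dep; intro y.
      apply functional_extensionality; intro f.
      apply mkArr_inj.
      exact (f_equal (fun h => h (mkArr x y f)) ea). }
    subst qm. f_equal; apply proof_irrelevance.
  - intros Phi [Hb Hbase].
    set (P := fob Phi).
    assert (base : forall x : Ob K, exists y, P (mkArr x x (idm x)) = mkArr y y (idm y)).
    { intro x. destruct (Hbase (mkArr x x (idm x))) as [y Hy].
      - exists x. reflexivity.
      - exists y. exact Hy. }
    set (Fo := fun x => proj1_sig (constructive_indefinite_description _ (base x))).
    assert (baseE : forall x, P (mkArr x x (idm x)) = mkArr (Fo x) (Fo x) (idm (Fo x))).
    { intro x. exact (proj2_sig (constructive_indefinite_description _ (base x))). }
    assert (Bk : forall f : Arr K, exists f', forall k l, Div k l f -> Div (P k) (P l) f').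
    { intro f. destruct (Hb (tildeBlock f)) as [t [[f' ->] Ht]].
      - exists f. reflexivity.
      - exists f'. intros k l D.
        assert (et : atgt k = atgt l).
        { destruct D as (a&b&c&k'&l'&e1&e2&e3). rewrite e1, e2. reflexivity. }
        exact (Ht (@mkArr (tildeCat K) l k et) D). }
    assert (tp : forall g h : Arr K, atgt h = atgt g -> atgt (P h) = atgt (P g)).
    { intros g h e. exact (@fmor _ _ Phi g h e). }
    assert (Bf : forall x y (f : Hom K x y), exists f',
               (forall k l, Div k l (mkArr x y f) -> Div (P k) (P l) f') /\
               f' = P (mkArr x y f)).
    { intros x y f. destruct (Bk (mkArr x y f)) as [f' Hf']. exists f'. split; [exact Hf'|].
      apply (@Div_id_l H (Fo y)). rewrite <- baseE. apply Hf'.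
      pose proof (@Div_intro K _ _ _ (idm y) f) as D. rewrite ginv_id, comp_id_l in D. exact D. }
    assert (Pmor : forall x y (f : Hom K x y), exists h, P (mkArr x y f) = mkArr (Fo x) (Fo y) h).
    { intros x y f. destruct (Bf x y f) as [f' [Hf' ef]].
      assert (es : asrc (P (mkArr x y f)) = Fo x).
      { rewrite <- ef. apply (@Div_id_r H (Fo x) (P (mkArr y x (ginv f)))).
        rewrite <- baseE. apply Hf'.
        pose proof (@Div_intro K _ _ _ (ginv f) (idm x)) as D.
        rewrite ginv_ginv, comp_id_r in D. exact D. }
      assert (et : atgt (P (mkArr x y f)) = Fo y).
      { rewrite (tp (mkArr y y (idm y)) (mkArr x y f) eq_refl), baseE. reflexivity. }
      destruct (P (mkArr x y f)) as [s t h]. simpl in *. subst s t. exists h. reflexivity. }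
    set (Fm := fun x y f => proj1_sig (constructive_indefinite_description _ (Pmor x y f))).
    assert (FmE : forall x y f, P (mkArr x y f) = mkArr (Fo x) (Fo y) (Fm x y f)).
    { intros x y f. exact (proj2_sig (constructive_indefinite_description _ (Pmor x y f))). }
    unshelve eexists (mkFunctor K H Fo Fm _ _).
    + intro x. apply mkArr_inj. rewrite <- FmE. apply baseE.
    + intros x y z g f.
      destruct (Bf x y f) as [f' [Hf' ef]].
      apply (@Div_comp H (Fo y) (Fo x) (Fo z)).
      rewrite <- !FmE, <- ef. apply Hf'.
      pose proof (@Div_intro K _ _ _ g (comp g f)) as D.
      rewrite comp_assoc, ginv_l, comp_id_l in D. exact D.
    + apply tilde_ext. simpl. apply functional_extensionality. intros [x y f].
      unfold arr_map. simpl. symmetry. apply FmE.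
Qed.
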